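(* Let $\mathcal{X}$ be a finite-dimensional Hilbert space with orthonormal basis $\{|j\rangle\}$, let $\xi\in\mathcal{D}(\mathcal{X})$ and let $\Phi$ be the erasure channel $\Phi(A)=\xi\operatorname{Tr}A$ (so $\Phi(\rho)=\xi$ for every density operator $\rho$). Let $U$ be a unitary on $\mathcal{X}$ and $\Psi(\rho)=U\rho U^\dagger$. Then for every $\sigma\in\mathcal{D}(\mathcal{X})$, $$G_{\mathrm{ch}}(\Phi,\Psi;\sigma)=\operatorname{Tr}\big(\sigma^2U^\dagger\xi U\big)\le\sum_i\lambda_i^{\downarrow}\mu_i^{\downarrow},$$ where $\lambda_1^\downarrow\ge\lambda_2^\downarrow\ge\dots$ are the eigenvalues of $\xi$ and $\mu_1^\downarrow\ge\mu_2^\downarrow\ge\dots$ the eigenvalues of $\sigma$.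
   Context: $\mathcal{D}(\mathcal{X})$ is the set of density operators on $\mathcal{X}$. Superfidelity: $G(\rho_1,\rho_2)=\operatorname{Tr}(\rho_1\rho_2)+\sqrt{1-\operatorname{Tr}\rho_1^2}\sqrt{1-\operatorname{Tr}\rho_2^2}$. Channel superfidelity: $G_{\mathrm{ch}}(\Phi,\Psi;\sigma)=\inf G\big((\Phi\otimes\mathbb{1}_{\mathcal{L}(\mathcal{Z})})(\xi'),(\Psi\otimes\mathbb{1}_{\mathcal{L}(\mathcal{Z})})(\xi')\big)$ over all finite-dimensional $\mathcal{Z}$ and all pure states $\xi'$ on $\mathcal{X}\otimes\mathcal{Z}$ with $\operatorname{Tr}_{\mathcal{Z}}\xi'=\sigma$. *)

(* Defs.v *)
(* matrices over an arbitrary numClosedFieldType C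
   (e.g. the complex numbers); Hilbert space X = C^n with its standard basis. *)
From HB Require Import structures.
From mathcomp Require Import all_boot all_order all_algebra.
Set Implicit Arguments. Unset Strict Implicit. Unset Printing Implicit Defensive.
Import Order.TTheory GRing.Theory Num.Theory.
Local Open Scope ring_scope.

Section Defs.
Variable C : numClosedFieldType.

Definition dag m n (A : 'M[C]_(m, n)) : 'M[C]_(n, m) := (map_mx Num.conj A)^T.

Definition psd n (A : 'M[C]_n) : Prop :=
  dag A = A /\ forall v : 'cV[C]_n, 0 <= (dag v *m A *m v) 0 0.
Definition density n (A : 'M[C]_n) : Prop := psd A /\ \tr A = 1.
Definition pure n (A : 'M[C]_n) : Prop :=
  density A /\ exists v : 'cV[C]_n, A = v *m dag v.

(* X (x) Z is identified with C^(n*m) via mxvec_index : 'I_n -> 'I_m -> 'I_(n*m) *)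
Definition idx_split n m (k : 'I_(n * m)) : 'I_n * 'I_m :=
  enum_val (cast_ord (esym (mxvec_cast n m)) k).

Definition kron n m (A : 'M[C]_n) (B : 'M[C]_m) : 'M[C]_(n * m) :=
  \matrix_(k, l) (A (idx_split k).1 (idx_split l).1 * B (idx_split k).2 (idx_split l).2).

Definition ptraceZ n m (M : 'M[C]_(n * m)) : 'M[C]_n :=
  \matrix_(i, j) \sum_(k < m) M (mxvec_index i k) (mxvec_index j k).

Definition tensor_id n m (Phi : 'M[C]_n -> 'M[C]_n) (M : 'M[C]_(n * m)) : 'M[C]_(n * m) :=
  \sum_(k < m) \sum_(l < m)
     kron (Phi (\matrix_(i, j) M (mxvec_index i k) (mxvec_index j l))) (delta_mx k l).

Definition superfid n (r1 r2 : 'M[C]_n) : C :=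
  \tr (r1 *m r2) + sqrtC (1 - \tr (r1 *m r1)) * sqrtC (1 - \tr (r2 *m r2)).

Definition Gch_set n (Phi Psi : 'M[C]_n -> 'M[C]_n) (sigma : 'M[C]_n) (g : C) : Prop :=
  exists (m : nat) (xi' : 'M[C]_(n * m)),
    pure xi' /\ ptraceZ xi' = sigma /\
    g = superfid (tensor_id Phi xi') (tensor_id Psi xi').

Definition is_inf (S : C -> Prop) (g : C) : Prop :=
  (forall x, S x -> g <= x) /\ (forall b, (forall x, S x -> b <= x) -> b <= g).

Definition is_Gch n (Phi Psi : 'M[C]_n -> 'M[C]_n) (sigma : 'M[C]_n) (g : C) : Prop :=
  is_inf (Gch_set Phi Psi sigma) g.

Definition eigen_desc n (A : 'M[C]_n) (s : seq C) : Prop :=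
  size s = n /\ char_poly A = \prod_(x <- s) ('X - x%:P) /\ sorted (fun x y => y <= x) s.

End Defs.

(* Main.v *)
Require Import Defs.
From HB Require Import structures.
From mathcomp Require Import all_boot all_order all_algebra all_fingroup ring.
Set Implicit Arguments. Unset Strict Implicit. Unset Printing Implicit Defensive.
Import Order.TTheory GRing.Theory Num.Theory Num.Def.
Local Open Scope ring_scope.

Section Abel.
Variable C : numClosedFieldType.

Lemma telesc (n : nat) (x : nat -> C) (i : 'I_n) : x n = 0 ->
  x i = \sum_(k < n) (i <= k)%N%:R * (x k - x k.+1).
Proof.
move=> xn.
rewrite -(big_mkord xpredT (fun k => (i <= k)%N%:R * (x k - x k.+1))).
rewrite (@big_cat_nat _ _ _ i) //=; last exact: ltnW.
rewrite big_nat_cond big1 ?add0r; last first.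
  by move=> k /andP[/andP[_ ki] _]; rewrite leqNgt ki mul0r.
rewrite big_nat_cond (eq_bigr (fun k => - (x k.+1 - x k))); last first.
  by move=> k /andP[/andP[ik _] _]; rewrite ik mul1r opprB.
rewrite -big_nat_cond sumrN telescope_sumr ?xn ?sub0r ?opprK //.
exact: ltnW.
Qed.


Lemma key_bound n (W : 'M[C]_n) (k l : 'I_n) :
  (forall i j, 0 <= W i j) ->
  (forall i, \sum_j W i j <= 1) -> (forall j, \sum_i W i j <= 1) ->
  \sum_(i < n) \sum_(j < n) ((i <= k)%N%:R * (j <= l)%N%:R * W i j) <=
  \sum_(i < n) ((i <= k)%N%:R * (i <= l)%N%:R : C).
Proof.
move=> W0 Wr Wc.
have H01 (b : bool) : 0 <= (b%:R : C) by case: b.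
have H1 (b : bool) : (b%:R : C) <= 1 by case: b.
case: (leqP k l) => [kl|lk].
- apply: (@le_trans _ _ (\sum_(i < n) (i <= k)%N%:R * \sum_(j < n) W i j)).
    apply: ler_sum => i _; rewrite mulr_sumr; apply: ler_sum => j _.
    rewrite -mulrA; apply: ler_wpM2l => //.
    by rewrite -[leRHS]mul1r; apply: ler_wpM2r.
  apply: ler_sum => i _.
  case ik: (i <= k)%N; last by rewrite !mul0r.
  by rewrite (leq_trans ik kl) !mul1r.
- rewrite exchange_big /=.
  apply: (@le_trans _ _ (\sum_(j < n) (j <= l)%N%:R * \sum_(i < n) W i j)).
    apply: ler_sum => j _; rewrite mulr_sumr; apply: ler_sum => i _.
    rewrite mulrAC mulrC; apply: ler_wpM2l => //.
    by rewrite -[leRHS]mul1r; apply: ler_wpM2r.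
  apply: ler_sum => j _.
  case jl: (j <= l)%N; last by rewrite !mulr0 mul0r.
  by rewrite (leq_trans jl (ltnW lk)) !mul1r.
Qed.

Lemma abel n (x y : nat -> C) (W : 'M[C]_n) :
  (forall k, (k < n)%N -> 0 <= x k - x k.+1) -> x n = 0 ->
  (forall k, (k < n)%N -> 0 <= y k - y k.+1) -> y n = 0 ->
  (forall i j, 0 <= W i j) ->
  (forall i, \sum_j W i j <= 1) -> (forall j, \sum_i W i j <= 1) ->
  \sum_i \sum_j W i j * (x i * y j) <= \sum_(i < n) x i * y i.
Proof.
move=> hx xn hy yn W0 Wr Wc.
have ex i := @telesc n x i xn; have ey i := @telesc n y i yn.
set cx := fun k => x k - x k.+1; set cy := fun k => y k - y k.+1.
have -> : \sum_i \sum_j W i j * (x i * y j) =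
   \sum_(k < n) \sum_(l < n) cx k * cy l *
     \sum_(i < n) \sum_(j < n) ((i <= k)%N%:R * (j <= l)%N%:R * W i j).
  under eq_bigr do under eq_bigr do rewrite ex ey mulr_suml mulr_sumr.
  under eq_bigr do under eq_bigr do under eq_bigr do rewrite mulr_sumr mulr_sumr.
  under eq_bigr do rewrite exchange_big.
  rewrite exchange_big.
  under eq_bigr do under eq_bigr do rewrite exchange_big.
  under eq_bigr do rewrite exchange_big.
  apply: eq_bigr => k _; apply: eq_bigr => l _.
  rewrite mulr_sumr; apply: eq_bigr => i _; rewrite mulr_sumr.
  by apply: eq_bigr => j _ /=; rewrite /cx /cy; ring.
have -> : \sum_(i < n) x i * y i =
   \sum_(k < n) \sum_(l < n) cx k * cy l *
     \sum_(i < n) ((i <= k)%N%:R * (i <= l)%N%:R).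
  under eq_bigr do rewrite ex ey mulr_suml.
  under eq_bigr do under eq_bigr do rewrite mulr_sumr.
  rewrite exchange_big; apply: eq_bigr => k _.
  rewrite exchange_big; apply: eq_bigr => l _.
  by rewrite mulr_sumr; apply: eq_bigr => i _ /=; rewrite /cx /cy; ring.
apply: ler_sum => k _; apply: ler_sum => l _.
apply: ler_wpM2l; first by apply: mulr_ge0; [exact: hx | exact: hy].
exact: key_bound.
Qed.

End Abel.
Section Spec.
Variable C : numClosedFieldType.

Lemma dagE m n (A : 'M[C]_(m, n)) : dag A = (A ^t conjC)%sesqui.
Proof. by rewrite /dag map_trmx. Qed.

Lemma dagM m n p (A : 'M[C]_(m, n)) (B : 'M[C]_(n, p)) : dag (A *m B) = dag B *m dag A.
Proof. by rewrite /dag map_mxM trmx_mul. Qed.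

Lemma dagK m n (A : 'M[C]_(m, n)) : dag (dag A) = A.
Proof. by apply/matrixP => i j; rewrite !mxE conjCK. Qed.

Lemma dagD m n (A B : 'M[C]_(m, n)) : dag (A + B) = dag A + dag B.
Proof. by apply/matrixP => i j; rewrite !mxE rmorphD. Qed.

Lemma dag_entry m n (A : 'M[C]_(m, n)) i j : dag A i j = (A j i)^*.
Proof. by rewrite !mxE. Qed.

Lemma unit_r n (P : 'M[C]_n) : P \is unitarymx -> P *m dag P = 1%:M.
Proof. by move/unitarymxP; rewrite dagE. Qed.

Lemma unit_l n (P : 'M[C]_n) : P \is unitarymx -> dag P *m P = 1%:M.
Proof.
move=> Pu; rewrite dagE -invmx_unitary //; apply: mulVmx.
exact: unitarymx_unit.
Qed.

Lemma unitary_dag n (P : 'M[C]_n) : P \is unitarymx -> dag P \is unitarymx.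
Proof. by move=> Pu; apply/unitarymxP; rewrite -dagE dagK unit_l. Qed.

Lemma unitaryM n (P Q : 'M[C]_n) : P \is unitarymx -> Q \is unitarymx ->
  P *m Q \is unitarymx.
Proof.
move=> Pu Qu; apply/unitarymxP; rewrite -dagE dagM mulmxA -(mulmxA P).
by rewrite unit_r // mulmx1 unit_r.
Qed.

Lemma spec n (A : 'M[C]_n) : dag A = A ->
  exists (P : 'M[C]_n) (d : 'rV[C]_n), P \is unitarymx /\ A = dag P *m diag_mx d *m P.
Proof.
move=> hA.
have An : A \is normalmx.
  by apply/normalmxP; rewrite -!dagE hA.
move/orthomx_spectralP: An => eA.
exists (spectralmx A), (spectral_diag A); split; first exact: spectral_unitarymx.
by rewrite {1}eA invmx_unitary ?spectral_unitarymx // dagE.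
Qed.

Lemma char_poly_conj n (P B : 'M[C]_n) : P \is unitarymx ->
  char_poly (dag P *m B *m P) = char_poly B.
Proof.
move=> Pu; rewrite /char_poly /char_poly_mx.
have -> : 'X%:M - map_mx polyC (dag P *m B *m P) =
  map_mx polyC (dag P) *m ('X%:M - map_mx polyC B) *m map_mx polyC P.
  rewrite mulmxBr mulmxBl !map_mxM; congr (_ - _).
  by rewrite scalar_mxC -mulmxA -map_mxM unit_l // map_mx1 mulmx1.
rewrite !det_mulmx mulrC mulrA -det_mulmx -map_mxM unit_r // map_mx1 det1 mul1r.
done.
Qed.

Lemma spec_sorted n (A : 'M[C]_n) s : dag A = A -> eigen_desc A s ->
  exists P : 'M[C]_n, P \is unitarymx /\ A = dag P *m diag_mx (\row_i s`_i) *m P.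
Proof.
move=> hA [ss [cp _]].
have [P [d [Pu eA]]] := spec hA.
have cpA : char_poly A = \prod_(i < n) ('X - (d 0 i)%:P).
  by rewrite eA char_poly_conj // char_poly_trig ?diag_mx_is_trig //;
     apply: eq_bigr => i _; rewrite mxE eqxx mulr1n.
have : perm_eq s [tuple d 0 i | i < n].
  apply: prod_XsubC_eq; rewrite -cp cpA big_tuple.
  by apply: eq_bigr => i _; rewrite tnth_mktuple.
case/tuple_permP => p es.
exists (row_perm p P); split.
  apply/unitarymxP; rewrite -dagE; apply/matrixP => i j.
  have := congr1 (fun M : 'M[C]_n => M (p i) (p j)) (unit_r Pu).
  rewrite !mxE (inj_eq perm_inj) => <-.
  by apply: eq_bigr => k _; rewrite !mxE.
rewrite eA !mul_mx_diag; apply/matrixP => a b; rewrite !mxE.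
rewrite (reindex_inj (@perm_inj _ p)).
apply: eq_bigr => i _; rewrite !mxE.
have -> : s`_i = d 0 (p i).
  by rewrite es -tnth_nth tnth_mktuple tnth_mktuple.
done.
Qed.

End Spec.

Section Ineq.
Variable C : numClosedFieldType.

Lemma cancel_r n m (X : 'M[C]_(m, n)) (P : 'M[C]_n) : P \is unitarymx ->
  X *m P *m dag P = X.
Proof. by move=> Pu; rewrite -mulmxA unit_r // mulmx1. Qed.

Lemma cancel_l n m (X : 'M[C]_(m, n)) (P : 'M[C]_n) : P \is unitarymx ->
  X *m dag P *m P = X.
Proof. by move=> Pu; rewrite -mulmxA unit_l // mulmx1. Qed.

Lemma psd_herm n (A : 'M[C]_n) : psd A -> dag A = A.
Proof. by case. Qed.

Lemma diag_nonneg n (A P : 'M[C]_n) (d : 'rV[C]_n) : psd A -> P \is unitarymx ->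
  A = dag P *m diag_mx d *m P -> forall i, 0 <= d 0 i.
Proof.
move=> [_ hv] Pu eA i.
have := hv (dag (row i P)).
have -> : dag (dag (row i P)) *m A *m dag (row i P) =
          row i (1%:M : 'M[C]_n) *m diag_mx d *m dag (row i (1%:M : 'M[C]_n)).
  rewrite dagK eA !mulmxA -row_mul unit_r // -!mulmxA; congr (_ *m (_ *m _)).
  by rewrite -[P in P *m _]dagK -dagM -row_mul unit_r.
rewrite mul_mx_diag !mxE (bigD1 i) //= big1 ?addr0; last first.
  by move=> k ki; rewrite !mxE eq_sym (negbTE ki) !mul0r.
by rewrite !mxE !eqxx conjC1 mulr1 mul1r.
Qed.

Lemma tr_conj n (Y P : 'M[C]_n) : P \is unitarymx -> \tr (dag P *m Y *m P) = \tr Y.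
Proof. by move=> Pu; rewrite mxtrace_mulC mulmxA unit_r // mul1mx. Qed.

Lemma trace_formula n (sigma xi U P Q : 'M[C]_n) (lam mu : seq C) :
  U \is unitarymx -> P \is unitarymx -> Q \is unitarymx ->
  sigma = dag P *m diag_mx (\row_i mu`_i) *m P ->
  xi = dag Q *m diag_mx (\row_i lam`_i) *m Q ->
  let R := Q *m U *m dag P in
  \tr (sigma *m sigma *m dag U *m xi *m U) =
  \sum_(i < n) \sum_(j < n) (R i j * (R i j)^*) * (lam`_i * mu`_j ^+ 2).
Proof.
move=> Uu Pu Qu es ex R.
have eR : dag R = P *m dag U *m dag Q by rewrite /R !dagM dagK mulmxA.
have -> : sigma *m sigma *m dag U *m xi *m U =
    dag P *m (diag_mx (\row_i mu`_i) *m diag_mx (\row_i mu`_i) *m dag R *m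
      diag_mx (\row_i lam`_i) *m R) *m P.
  by rewrite es ex eR /R !mulmxA (cancel_r _ Pu) (cancel_l _ Pu).
rewrite tr_conj // mulmx_diag mul_diag_mx mul_mx_diag /mxtrace.
rewrite exchange_big /=; apply: eq_bigr => j _.
rewrite !mxE; apply: eq_bigr => i _; rewrite !mxE.
ring.
Qed.

Lemma sorted_step (s : seq C) n : size s = n -> sorted (fun x y => y <= x) s ->
  (forall i, (i < n)%N -> 0 <= s`_i) ->
  forall k, (k < n)%N -> 0 <= s`_k - s`_k.+1.
Proof.
move=> ss so s0 k kn; rewrite subr_ge0.
case: (ltnP k.+1 n) => [k1n|].
  by move/sortedP: so => /(_ 0 k); rewrite ss => /(_ k1n).
move=> nk1; have -> : k.+1 = n by apply/eqP; rewrite eqn_leq kn nk1.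
by rewrite nth_default ?ss // s0.
Qed.

Lemma main_ineq n (sigma xi U : 'M[C]_n) (lam mu : seq C) :
  density xi -> U \is unitarymx -> density sigma ->
  eigen_desc xi lam -> eigen_desc sigma mu ->
  \tr (sigma *m sigma *m dag U *m xi *m U) <= \sum_(i < n) lam`_i * mu`_i.
Proof.
move=> [pxi txi] Uu [psig tsig] elam emu.
have [Q [Qu eQ]] := spec_sorted (psd_herm pxi) elam.
have [P [Pu eP]] := spec_sorted (psd_herm psig) emu.
case: elam => sl [_ sol]; case: emu => sm [_ som].
have l0 i : (i < n)%N -> 0 <= lam`_i.
  move=> lt; have := diag_nonneg pxi Qu eQ (Ordinal lt); by rewrite mxE.
have m0 i : (i < n)%N -> 0 <= mu`_i.
  move=> lt; have := diag_nonneg psig Pu eP (Ordinal lt); by rewrite mxE.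
have m1 i : (i < n)%N -> mu`_i <= 1.
  move=> lt; rewrite -tsig eP tr_conj // mxtrace_diag.
  rewrite (bigD1 (Ordinal lt)) //= mxE -[leLHS]addr0 lerD2l.
  by apply: sumr_ge0 => k _; rewrite mxE; apply: m0.
rewrite (trace_formula Uu Pu Qu eP eQ) /=.
set R := Q *m U *m dag P.
have Ru : R \is unitarymx by rewrite /R unitaryM // ?unitaryM // unitary_dag.
set W := \matrix_(i, j) (R i j * (R i j)^*).
have W0 i j : 0 <= W i j by rewrite mxE mul_conjC_ge0.
apply: (@le_trans _ _ (\sum_(i < n) \sum_(j < n) W i j * (lam`_i * mu`_j))).
  apply: ler_sum => i _; apply: ler_sum => j _; rewrite [W i j]mxE.
  apply: ler_wpM2l; first exact: mul_conjC_ge0.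
  apply: ler_wpM2l; first exact: l0.
  rewrite expr2 -[leRHS]mulr1; apply: ler_wpM2l; [exact: m0 | exact: m1].
apply: abel.
- exact: sorted_step.
- by rewrite nth_default ?sl.
- exact: sorted_step.
- by rewrite nth_default ?sm.
- exact: W0.
- move=> i; have := congr1 (fun M : 'M[C]_n => M i i) (unit_r Ru) => /= h.
  rewrite [(R *m _) i i]mxE [1%:M i i]mxE eqxx mulr1n in h.
  rewrite -h le_eqVlt; apply/orP; left; apply/eqP.
  by apply: eq_bigr => j _; rewrite [W i j]mxE dag_entry.
- move=> j; have := congr1 (fun M : 'M[C]_n => M j j) (unit_l Ru) => /= h.
  rewrite [(_ *m R) j j]mxE [1%:M j j]mxE eqxx mulr1n in h.
  rewrite -h le_eqVlt; apply/orP; left; apply/eqP.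
  by apply: eq_bigr => i _; rewrite [W i j]mxE dag_entry mulrC.
Qed.

End Ineq.

Section Gch.
Variable C : numClosedFieldType.

Lemma idx_splitK n m (i : 'I_n) (k : 'I_m) : idx_split (mxvec_index i k) = (i, k).
Proof. by rewrite /idx_split /mxvec_index cast_ordK enum_rankK. Qed.

Lemma sum_idx n m (F : 'I_(n * m) -> C) :
  \sum_a F a = \sum_(i < n) \sum_(k < m) F (mxvec_index i k).
Proof.
rewrite (reindex (uncurry (@mxvec_index n m))) /=; last first.
  exact: curry_mxvec_bij.
by rewrite pair_big; apply: eq_bigr => -[i k].
Qed.

Lemma tensor_idE n m (Phi : 'M[C]_n -> 'M[C]_n) (X : 'M[C]_(n * m)) i k j l :
  tensor_id Phi X (mxvec_index i k) (mxvec_index j l) =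
  Phi (\matrix_(i', j') X (mxvec_index i' k) (mxvec_index j' l)) i j.
Proof.
rewrite /tensor_id summxE (bigD1 k) //= summxE (bigD1 l) //=.
rewrite [X in _ + X]big1 ?addr0; last first.
  move=> k' kk; rewrite summxE big1 // => l' _.
  by rewrite !mxE !idx_splitK /= eq_sym (negbTE kk) mulr0.
rewrite big1 ?addr0; last first.
  by move=> l' ll; rewrite !mxE !idx_splitK /= eqxx eq_sym (negbTE ll) mulr0.
by rewrite !mxE !idx_splitK /= !eqxx mulr1.
Qed.


Definition vmat n m (v : 'cV[C]_(n * m)) : 'M[C]_(n, m) :=
  \matrix_(i, k) v (mxvec_index i k) 0.

Lemma vv_entry N (v : 'cV[C]_N) a b : (v *m dag v) a b = v a 0 * (v b 0)^*.
Proof. by rewrite !mxE big_ord1 !mxE. Qed.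

Lemma ptrace_vv n m (v : 'cV[C]_(n * m)) :
  ptraceZ (v *m dag v) = vmat v *m dag (vmat v).
Proof.
apply/matrixP => i j; rewrite !mxE; apply: eq_bigr => k _.
by rewrite vv_entry !mxE.
Qed.

Lemma trace_vv n m (v : 'cV[C]_(n * m)) :
  \tr (v *m dag v) = \tr (vmat v *m dag (vmat v)).
Proof.
rewrite /mxtrace sum_idx; apply: eq_bigr => i _; rewrite mxE.
by apply: eq_bigr => k _; rewrite vv_entry !mxE.
Qed.

Lemma rho1E n m (xi : 'M[C]_n) (v : 'cV[C]_(n * m)) i k j l :
  tensor_id (fun A : 'M[C]_n => \tr A *: xi) (v *m dag v)
     (mxvec_index i k) (mxvec_index j l) =
  (\sum_(r < n) vmat v r k * (vmat v r l)^*) * xi i j.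
Proof.
rewrite tensor_idE mxE; congr (_ * _); rewrite /mxtrace.
by apply: eq_bigr => r _; rewrite !mxE big_ord1 !mxE.
Qed.

Lemma rho2E n m (U : 'M[C]_n) (v : 'cV[C]_(n * m)) :
  let w := \col_a (U *m vmat v) (idx_split a).1 (idx_split a).2 in
  tensor_id (fun A : 'M[C]_n => U *m A *m dag U) (v *m dag v) = w *m dag w.
Proof.
move=> w; apply/matrixP => a b.
case/mxvec_indexP: a => i k; case/mxvec_indexP: b => j l.
rewrite tensor_idE vv_entry !mxE !idx_splitK /=.
under eq_bigr do rewrite !mxE.
rewrite rmorph_sum mulr_sumr; apply: eq_bigr => i' _.
rewrite !mulr_suml; apply: eq_bigr => j' _.
rewrite !mxE big_ord1 !mxE rmorphM.
ring.
Qed.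


Lemma superfid_eq n m (xi U sigma : 'M[C]_n) (xi' : 'M[C]_(n * m)) :
  U \is unitarymx -> pure xi' -> ptraceZ xi' = sigma ->
  superfid (tensor_id (fun A : 'M[C]_n => \tr A *: xi) xi')
           (tensor_id (fun A : 'M[C]_n => U *m A *m dag U) xi') =
  \tr (sigma *m sigma *m dag U *m xi *m U).
Proof.
move=> Uu [[_ tr1] [v ev]] ept; subst xi'.
rewrite ptrace_vv in ept; rewrite trace_vv in tr1.
set M := vmat v in ept tr1 *.
set N := U *m M.
rewrite /superfid rho2E -/M -/N.
set w := \col_a N (idx_split a).1 (idx_split a).2.
have wE i k : w (mxvec_index i k) 0 = N i k by rewrite mxE idx_splitK.
have trN : \tr (dag N *m N) = 1.
  by rewrite /N dagM !mulmxA (cancel_l _ Uu) mxtrace_mulC.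
have ww : dag w *m w = 1%:M.
  apply/matrixP => r s; rewrite !ord1 [RHS]mxE eqxx mulr1n -trN.
  rewrite mxE sum_idx /mxtrace exchange_big /=; apply: eq_bigr => k _.
  by rewrite mxE; apply: eq_bigr => i _; rewrite !dag_entry wE.
have -> : \tr (w *m dag w *m (w *m dag w)) = 1.
  by rewrite mulmxA -(mulmxA w) ww mulmx1 mxtrace_mulC ww mxtrace1.
rewrite subrr sqrtC0 mulr0 addr0.
have eT : \tr (sigma *m sigma *m dag U *m xi *m U) =
          \tr (dag N *m xi *m N *m (dag M *m M)).
  rewrite -ept /N dagM.
  have -> : M *m dag M *m (M *m dag M) *m dag U *m xi *m U =
            M *m (dag M *m M *m dag M *m dag U *m xi *m U) by rewrite !mulmxA.
  rewrite mxtrace_mulC !mulmxA.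
  have -> : dag M *m M *m dag M *m dag U *m xi *m U *m M =
            (dag M *m M) *m (dag M *m dag U *m xi *m U *m M) by rewrite !mulmxA.
  by rewrite mxtrace_mulC !mulmxA.
have tr1x1 (A : 'M[C]_1) : \tr A = A 0 0 by rewrite /mxtrace big_ord1.
rewrite eT mulmxA mxtrace_mulC tr1x1 mxE sum_idx.
under eq_bigr => i _ do under eq_bigr => k _ do rewrite dag_entry wE [(_ *m w) _ _]mxE sum_idx.
under eq_bigr => i _ do under eq_bigr => k _ do
  under eq_bigr => j _ do under eq_bigr => l _ do rewrite rho1E wE -/M.
under eq_bigr => i _ do under eq_bigr => k _ do
  (rewrite mulr_sumr; under eq_bigr => j _ do rewrite mulr_sumr).
rewrite exchange_big /=.
under eq_bigr => k _ do under eq_bigr => i _ do rewrite exchange_big /=.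
under eq_bigr => k _ do rewrite exchange_big /=.
rewrite /mxtrace; apply: eq_bigr => k _; rewrite mxE; apply: eq_bigr => l _.
rewrite !mxE mulr_suml exchange_big /=; apply: eq_bigr => j _.
rewrite [(dag N *m xi) _ _]mxE !mulr_suml; apply: eq_bigr => i _.
have -> : \sum_(r < n) dag M l r * M r k = \sum_(r < n) M r k * (M r l)^*.
  by apply: eq_bigr => r _; rewrite dag_entry mulrC.
rewrite dag_entry; ring.
Qed.



Lemma purif n (sigma : 'M[C]_n) : density sigma ->
  exists m (xi' : 'M[C]_(n * m)), pure xi' /\ ptraceZ xi' = sigma.
Proof.
move=> [ps ts].
have [P [d [Pu eS]]] := spec (psd_herm ps).
have d0 := diag_nonneg ps Pu eS.
set D' := diag_mx (\row_i sqrtC (d 0 i)).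
set M := dag P *m D'.
have dD : dag D' = D'.
  apply/matrixP => i j; rewrite dag_entry !mxE rmorphMn.
  case: (eqVneq i j) => [->|ne]; last by rewrite ?mulr0n ?eq_sym ?(negbTE ne) ?mulr0n.
  rewrite ?eqxx ?mulr1n; apply: geC0_conj; by rewrite sqrtC_ge0.
have eM : M *m dag M = sigma.
  rewrite /M dagM dagK dD mulmxA -(mulmxA (dag P)) mulmx_diag eS; congr (_ *m _ *m _).
  by congr diag_mx; apply/rowP => i; rewrite !mxE -expr2 sqrtCK.
set v : 'cV[C]_(n * n) := \col_a M (idx_split a).1 (idx_split a).2.
have vM : vmat v = M by apply/matrixP => i k; rewrite !mxE idx_splitK.
exists n, (v *m dag v); split; last by rewrite ptrace_vv vM eM.
split; last by exists v.
split; last by rewrite trace_vv vM eM ts.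
split; first by rewrite dagM dagK.
move=> u; rewrite !mulmxA -(mulmxA (dag u *m v)).
have -> : dag v *m u = dag (dag u *m v) by rewrite dagM dagK.
by rewrite mxE big_ord1 dag_entry mul_conjC_ge0.
Qed.

End Gch.

Theorem mainTheorem5 (C : numClosedFieldType) (n : nat)
  (xi U sigma : 'M[C]_n) (lam mu : seq C) :
  density xi -> U \is unitarymx -> density sigma ->
  eigen_desc xi lam -> eigen_desc sigma mu ->
  is_Gch (fun A : 'M[C]_n => \tr A *: xi) (fun A : 'M[C]_n => U *m A *m dag U) sigma
         (\tr (sigma *m sigma *m dag U *m xi *m U)) /\
  \tr (sigma *m sigma *m dag U *m xi *m U) <= \sum_(i < n) lam`_i * mu`_i.
Proof.
move=> dxi Uu dsig elam emu; split; last exact: main_ineq.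
split.
  by move=> x [m [xi' [pu [pt ->]]]]; rewrite (superfid_eq _ Uu pu pt).
move=> b hb; have [m [xi' [pu pt]]] := purif dsig.
have := hb _ (ex_intro _ m (ex_intro _ xi' (conj pu (conj pt erefl)))).
by rewrite (superfid_eq _ Uu pu pt).
Qed.
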